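(* Let $(X,Y,Z)$ and $(X',Y',Z')$ be triples of random variables on finite alphabets such that $(X,Y,Z)$ is independent of $(X',Y',Z')$. Then $$\operatorname{Un}((X,X')\to(Z,Z')\mid(Y,Y'))=\operatorname{Un}(X\to Z\mid Y)+\operatorname{Un}(X'\to Z'\mid Y'),$$ where $\operatorname{Un}$ is the unique information defined below.
   Context: For random variables $U,V,W$ on finite alphabets $\mathcal{U},\mathcal{V},\mathcal{W}$ and each $v\in\mathcal{V}$ with $\Pr(V=v)>0$, let $(A_v,B_v,C_v)$ be the random triple on $\mathcal{U}\times\mathcal{V}\times\mathcal{W}$ with $\Pr(A_v=u,B_v=v',C_v=w)=0$ if $\Pr(W=w)=0$ and $\Pr(A_v=u,B_v=v',C_v=w)=\Pr(U=u,V=v',W=w)\Pr(W=w\mid V=v)/\Pr(W=w)$ otherwise. The unique information is $\operatorname{Un}(U\to W\mid V)=\sum_{v:\Pr(V=v)>0}\Pr(V=v)\,I(A_v;C_v)$, where $I$ is mutual information. Pairs such as $(X,X')$ are regarded as single random variables on product alphabets. *)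

(* Defs.v *)
From mathcomp Require Import all_boot all_order all_algebra.
From mathcomp Require Import reals exp.
Set Implicit Arguments. Unset Strict Implicit. Unset Printing Implicit Defensive.
Import Order.TTheory GRing.Theory Num.Theory.
Local Open Scope ring_scope.

Section Info.
Variable R : realType.

Definition is_pmf (Om : finType) (P : Om -> R) : Prop :=
  (forall o, 0 <= P o) /\ \sum_(o : Om) P o = 1.

Definition mutinf (TA TC : finType) (r : TA -> TC -> R) : R :=
  \sum_(a : TA) \sum_(c : TC)
     (if r a c == 0 then 0
      else r a c * ln (r a c / ((\sum_(c' : TC) r a c') * (\sum_(a' : TA) r a' c)))).

Variables (Om : finType) (P : Om -> R).
Variables (TU TV TW : finType) (U : Om -> TU) (V : Om -> TV) (W : Om -> TW).

Definition pUVW (u : TU) (v : TV) (w : TW) : R :=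
  \sum_(o | (U o == u) && (V o == v) && (W o == w)) P o.
Definition pV (v : TV) : R := \sum_(o | V o == v) P o.
Definition pW (w : TW) : R := \sum_(o | W o == w) P o.
Definition pVW (v : TV) (w : TW) : R := \sum_(o | (V o == v) && (W o == w)) P o.

(* joint pmf of the triple (A_v, B_v, C_v) *)
Definition tri_pmf (v : TV) (u : TU) (v' : TV) (w : TW) : R :=
  if pW w == 0 then 0
  else pUVW u v' w * (pVW v w / pV v) / pW w.

Definition UnInfo : R :=
  \sum_(v : TV | 0 < pV v) pV v * mutinf (fun u w => \sum_(v' : TV) tri_pmf v u v' w).

End Info.

(* Main.v *)
Require Import Defs.
From mathcomp Require Import all_boot all_order all_algebra.
From mathcomp Require Import reals exp.
From mathcomp Require Import ring lra.
Import Order.TTheory GRing.Theory Num.Theory.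
Local Open Scope ring_scope.

Section Generic.
Variable R : realType.

Lemma mutinf_ext (TA TC : finType) (r r' : TA -> TC -> R) :
  (forall a c, r a c = r' a c) -> mutinf r = mutinf r'.
Proof.
move=> h; rewrite /mutinf; apply: eq_bigr => a _; apply: eq_bigr => c _.
rewrite h; congr (if _ then _ else _ * ln (_ / (_ * _))).
  by apply: eq_bigr => c' _; rewrite h.
by apply: eq_bigr => a' _; rewrite h.
Qed.

Lemma sum4 (TA TC TA' TC' : finType) (f : TA -> TC -> R) (g : TA' -> TC' -> R) :
  (\sum_a \sum_c f a c) * (\sum_a' \sum_c' g a' c') =
  \sum_a \sum_a' \sum_c \sum_c' f a c * g a' c'.
Proof.
rewrite big_distrlr; apply: eq_bigr => a _; apply: eq_bigr => a' _.
by rewrite big_distrlr.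
Qed.

Lemma split4 (TA TC TA' TC' : finType) (F G : TA -> TA' -> TC -> TC' -> R) :
  \sum_a \sum_a' \sum_c \sum_c' (F a a' c c' + G a a' c c') =
  \sum_a \sum_a' \sum_c \sum_c' F a a' c c' + \sum_a \sum_a' \sum_c \sum_c' G a a' c c'.
Proof.
rewrite -big_split; apply: eq_bigr => a _; rewrite -big_split; apply: eq_bigr => a' _.
rewrite -big_split; apply: eq_bigr => c _; by rewrite -big_split.
Qed.

Lemma le_sum_term (I : finType) (F : I -> R) i :
  (forall j, 0 <= F j) -> F i <= \sum_j F j.
Proof.
move=> h; rewrite (bigD1 i) //= lerDl; exact: sumr_ge0.
Qed.

Lemma mutinf_prod (TA TC TA' TC' : finType) (r1 : TA -> TC -> R) (r2 : TA' -> TC' -> R) :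
  (forall a c, 0 <= r1 a c) -> (forall a c, 0 <= r2 a c) ->
  mutinf (fun a c => r1 a.1 c.1 * r2 a.2 c.2) =
  mutinf r1 * (\sum_a \sum_c r2 a c) + (\sum_a \sum_c r1 a c) * mutinf r2.
Proof.
move=> h1 h2; rewrite /mutinf !sum4 -split4.
transitivity (\sum_a \sum_a' \sum_c \sum_c'
  (if r1 a c * r2 a' c' == 0 then 0 else
     r1 a c * r2 a' c' * ln (r1 a c * r2 a' c' /
        ((\sum_(q : TC * TC') r1 a q.1 * r2 a' q.2) *
         \sum_(q : TA * TA') r1 q.1 c * r2 q.2 c')))).
  rewrite [RHS]pair_bigA; apply: eq_bigr => -[a a'] _ /=.
  by rewrite [RHS]pair_bigA; apply: eq_bigr => -[c c'] _ /=.
apply: eq_bigr => a _; apply: eq_bigr => a' _.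
apply: eq_bigr => c _; apply: eq_bigr => c' _.
have m1 : \sum_(q : TC * TC') r1 a q.1 * r2 a' q.2 = (\sum_c r1 a c) * (\sum_c' r2 a' c').
  by rewrite big_distrlr /= pair_bigA.
have m2 : \sum_(q : TA * TA') r1 q.1 c * r2 q.2 c' = (\sum_x r1 x c) * (\sum_x' r2 x' c').
  by rewrite big_distrlr /= pair_bigA.
rewrite m1 m2 mulf_eq0.
have [e1|n1] := eqVneq (r1 a c) 0; first by rewrite e1 /= !mul0r addr0.
have [e2|n2] := eqVneq (r2 a' c') 0; first by rewrite e2 /= !mulr0 add0r.
rewrite /=.
have p1 : 0 < r1 a c by rewrite lt_def n1 h1.
have p2 : 0 < r2 a' c' by rewrite lt_def n2 h2.
have q1 : 0 < \sum_c0 r1 a c0 by apply: (lt_le_trans p1); apply: le_sum_term.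
have q2 : 0 < \sum_c0 r2 a' c0 by apply: (lt_le_trans p2); apply: le_sum_term.
have q3 : 0 < \sum_x r1 x c by apply: (lt_le_trans p1); rewrite (bigD1 a) //= lerDl sumr_ge0.
have q4 : 0 < \sum_x r2 x c' by apply: (lt_le_trans p2); rewrite (bigD1 a') //= lerDl sumr_ge0.
set A1 := \sum_c0 r1 a c0; set A2 := \sum_c0 r2 a' c0.
set B1 := \sum_x r1 x c; set B2 := \sum_x r2 x c'.
have -> : r1 a c * r2 a' c' / (A1 * A2 * (B1 * B2)) =
          (r1 a c / (A1 * B1)) * (r2 a' c' / (A2 * B2)).
  by rewrite !invfM; ring.
rewrite lnM ?posrE; last by rewrite divr_gt0 // mulr_gt0.
  by ring.
by rewrite divr_gt0 // mulr_gt0.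
Qed.

Variables (Om : finType) (P : Om -> R).
Hypothesis HP0 : forall o, 0 <= P o.
Hypothesis HP1 : \sum_o P o = 1.

Lemma part_full (T : finType) (f : Om -> T) (A : pred Om) :
  \sum_(o | A o) P o = \sum_t \sum_(o | A o && (f o == t)) P o.
Proof. by rewrite (partition_big f xpredT). Qed.

Lemma part (T : finType) (f : Om -> T) (A : pred T) :
  \sum_(o | A (f o)) P o = \sum_(t | A t) \sum_(o | f o == t) P o.
Proof.
rewrite (partition_big f A) //; apply: eq_bigr => t At; apply: eq_bigl => o.
by case: eqP => [->|]; rewrite ?At ?andbF.
Qed.

Section Single.
Variables (TU TV TW : finType) (U : Om -> TU) (V : Om -> TV) (W : Om -> TW).

Lemma pV_ge0 v : 0 <= pV P V v. Proof. exact: sumr_ge0. Qed.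
Lemma pW_ge0 w : 0 <= pW P W w. Proof. exact: sumr_ge0. Qed.
Lemma pVW_ge0 v w : 0 <= pVW P V W v w. Proof. exact: sumr_ge0. Qed.
Lemma pUVW_ge0 u v w : 0 <= pUVW P U V W u v w. Proof. exact: sumr_ge0. Qed.

Lemma tri_ge0 v u v' w : 0 <= tri_pmf P U V W v u v' w.
Proof.
rewrite /tri_pmf; case: eqP => // _.
by rewrite divr_ge0 ?pW_ge0 // mulr_ge0 ?pUVW_ge0 // divr_ge0 ?pVW_ge0 ?pV_ge0.
Qed.

Lemma sum_pV : \sum_v pV P V v = 1.
Proof. by rewrite -HP1 (part_full _ V xpredT). Qed.

Lemma sum_pos_pV : \sum_(v | 0 < pV P V v) pV P V v = 1.
Proof.
rewrite -sum_pV [RHS](bigID (fun v => 0 < pV P V v)) /= [X in _ = _ + X]big1 ?addr0 //.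
by move=> v; rewrite lt_def pV_ge0 andbT negbK => /eqP.
Qed.

Lemma marg_UV w : \sum_u \sum_v' pUVW P U V W u v' w = pW P W w.
Proof.
rewrite /pW (part_full _ U); apply: eq_bigr => u _.
rewrite (part_full _ V); apply: eq_bigr => v' _; apply: eq_bigl => o.
by case: (U o == u); case: (V o == v'); case: (W o == w).
Qed.

Lemma marg_V w : \sum_v pVW P V W v w = pW P W w.
Proof.
rewrite /pW (part_full _ V); apply: eq_bigr => v _; apply: eq_bigl => o.
by case: (V o == v); case: (W o == w).
Qed.

Lemma marg_W v : \sum_w pVW P V W v w = pV P V v.
Proof.
rewrite /pV (part_full _ W); apply: eq_bigr => w _; apply: eq_bigl => o.
by case: (V o == v); case: (W o == w).
Qed.

Lemma tri_sum1 v : 0 < pV P V v ->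
  \sum_u \sum_w \sum_v' tri_pmf P U V W v u v' w = 1.
Proof.
move=> hv; rewrite exchange_big /=.
transitivity (\sum_w pVW P V W v w / pV P V v); last first.
  by rewrite -mulr_suml marg_W divff // gt_eqF.
apply: eq_bigr => w _.
transitivity (if pW P W w == 0 then 0
   else (\sum_u \sum_v' pUVW P U V W u v' w) * (pVW P V W v w / pV P V v) / pW P W w).
  rewrite /tri_pmf; case: eqP => _; first by rewrite big1 // => u _; rewrite big1.
  rewrite !mulr_suml; apply: eq_bigr => u _; by rewrite !mulr_suml.
rewrite marg_UV; case: eqP => h.
  have H0 : \sum_v' pVW P V W v' w = 0 by rewrite marg_V h.
  by rewrite (psumr_eq0P (fun v' _ => pVW_ge0 v' w) H0) // mul0r.
by rewrite mulrAC divff ?mul1r //; apply/eqP.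
Qed.

End Single.

Lemma pos_mul (a b : R) : 0 <= a -> 0 <= b -> (0 < a * b) = (0 < a) && (0 < b).
Proof. by move=> ha hb; rewrite !lt_def mulf_eq0 negb_or mulr_ge0 // ha hb !andbT. Qed.

Lemma fin_sum (I J : finType) (p : I -> R) (q : J -> R) (A : pred I) (B : pred J)
  (f : I -> R) (g : J -> R) :
  \sum_(j | B j) q j = 1 -> \sum_(i | A i) p i = 1 ->
  \sum_(i | A i) \sum_(j | B j) p i * q j * (f i + g j) =
  \sum_(i | A i) p i * f i + \sum_(j | B j) q j * g j.
Proof.
move=> hq hp.
transitivity (\sum_(i | A i) (p i * f i + p i * \sum_(j | B j) q j * g j)).
  apply: eq_bigr => i _.
  rewrite mulr_sumr -[p i * f i]mulr1 -hq mulr_sumr -big_split.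
  by apply: eq_bigr => j _ /=; ring.
by rewrite big_split /= -mulr_suml hp mul1r.
Qed.

Section Indep.
Variables (TX TY TZ TX' TY' TZ' : finType)
  (X : Om -> TX) (Y : Om -> TY) (Z : Om -> TZ)
  (X' : Om -> TX') (Y' : Om -> TY') (Z' : Om -> TZ').
Hypothesis Hind : forall x y z x' y' z',
     \sum_(o | [&& X o == x, Y o == y, Z o == z, X' o == x', Y' o == y' & Z' o == z']) P o
     = (\sum_(o | [&& X o == x, Y o == y & Z o == z]) P o)
       * (\sum_(o | [&& X' o == x', Y' o == y' & Z' o == z']) P o).

Lemma gen (A : pred (TX * TY * TZ)) (B : pred (TX' * TY' * TZ')) :
  \sum_(o | A (X o, Y o, Z o) && B (X' o, Y' o, Z' o)) P o =
  (\sum_(o | A (X o, Y o, Z o)) P o) * (\sum_(o | B (X' o, Y' o, Z' o)) P o).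
Proof.
have := part _ (fun o => ((X o, Y o, Z o), (X' o, Y' o, Z' o))) (fun t => A t.1 && B t.2).
move=> /= ->.
rewrite (part _ (fun o => (X o, Y o, Z o)) A) (part _ (fun o => (X' o, Y' o, Z' o)) B).
rewrite big_distrlr [RHS]pair_big /=; apply: eq_bigr => -[[[x y] z] [[x' y'] z']] _ /=.
have e1 : \sum_(o | (X o, Y o, Z o) == (x, y, z)) P o =
          \sum_(o | [&& X o == x, Y o == y & Z o == z]) P o.
  by apply: eq_bigl => o; rewrite !xpair_eqE -!andbA.
have e2 : \sum_(o | (X' o, Y' o, Z' o) == (x', y', z')) P o =
          \sum_(o | [&& X' o == x', Y' o == y' & Z' o == z']) P o.
  by apply: eq_bigl => o; rewrite !xpair_eqE -!andbA.
rewrite e1 e2 -Hind; apply: eq_bigl => o; by rewrite !xpair_eqE -!andbA.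
Qed.

Let XX := fun o => (X o, X' o).
Let YY := fun o => (Y o, Y' o).
Let ZZ := fun o => (Z o, Z' o).

Lemma pUVW_prod x x' y y' z z' :
  pUVW P XX YY ZZ (x, x') (y, y') (z, z') = pUVW P X Y Z x y z * pUVW P X' Y' Z' x' y' z'.
Proof.
have := gen (fun t => (t.1.1 == x) && (t.1.2 == y) && (t.2 == z))
            (fun t => (t.1.1 == x') && (t.1.2 == y') && (t.2 == z')).
rewrite /pUVW /XX /YY /ZZ /= => <-; apply: eq_bigl => o; rewrite !xpair_eqE.
by case: (X o == x); case: (X' o == x'); case: (Y o == y); case: (Y' o == y'); case: (Z o == z); case: (Z' o == z').
Qed.

Lemma pV_prod y y' : pV P YY (y, y') = pV P Y y * pV P Y' y'.
Proof.
have := gen (fun t => t.1.2 == y) (fun t => t.1.2 == y').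
by rewrite /pV /YY /= => <-; apply: eq_bigl => o; rewrite !xpair_eqE.
Qed.

Lemma pW_prod z z' : pW P ZZ (z, z') = pW P Z z * pW P Z' z'.
Proof.
have := gen (fun t => t.2 == z) (fun t => t.2 == z').
by rewrite /pW /ZZ /= => <-; apply: eq_bigl => o; rewrite !xpair_eqE.
Qed.

Lemma pVW_prod y y' z z' : pVW P YY ZZ (y, y') (z, z') = pVW P Y Z y z * pVW P Y' Z' y' z'.
Proof.
have := gen (fun t => (t.1.2 == y) && (t.2 == z)) (fun t => (t.1.2 == y') && (t.2 == z')).
rewrite /pVW /YY /ZZ /= => <-; apply: eq_bigl => o; rewrite !xpair_eqE.
by case: (Y o == y); case: (Y' o == y'); case: (Z o == z); case: (Z' o == z').
Qed.

Lemma tri_prod y y' x x' y1 y1' z z' :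
  tri_pmf P XX YY ZZ (y, y') (x, x') (y1, y1') (z, z') =
  tri_pmf P X Y Z y x y1 z * tri_pmf P X' Y' Z' y' x' y1' z'.
Proof.
rewrite /tri_pmf pUVW_prod pV_prod pW_prod pVW_prod mulf_eq0.
have [e|e] := eqVneq (pW P Z z) 0; first by rewrite /= mul0r.
have [e'|e'] := eqVneq (pW P Z' z') 0; first by rewrite /= mulr0.
by rewrite /= !invfM; ring.
Qed.

Lemma main_eq :
  UnInfo P XX YY ZZ = UnInfo P X Y Z + UnInfo P X' Y' Z'.
Proof.
rewrite /UnInfo.
transitivity (\sum_(y | 0 < pV P Y y) \sum_(y' | 0 < pV P Y' y')
  pV P Y y * pV P Y' y' *
   (mutinf (fun u w => \sum_v' tri_pmf P X Y Z y u v' w) +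
    mutinf (fun u w => \sum_v' tri_pmf P X' Y' Z' y' u v' w))).
  rewrite [RHS]pair_big /=; apply: eq_big => -[y y'] /=.
    by rewrite pV_prod pos_mul ?pV_ge0.
  move=> hpos; have /andP[hy hy'] : (0 < pV P Y y) && (0 < pV P Y' y') by rewrite -pos_mul ?pV_ge0 // -pV_prod.
  rewrite pV_prod; congr (_ * _).
  rewrite (mutinf_ext _ _ _ (fun a c =>
       (fun u w => \sum_v' tri_pmf P X Y Z y u v' w) a.1 c.1 *
       (fun u w => \sum_v' tri_pmf P X' Y' Z' y' u v' w) a.2 c.2)).
    rewrite (mutinf_prod _ _ _ _ (fun u w => \sum_v' tri_pmf P X Y Z y u v' w) (fun u w => \sum_v' tri_pmf P X' Y' Z' y' u v' w)) /=; last 2 first.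
    - by move=> a c; apply: sumr_ge0 => i _; apply: tri_ge0.
    - by move=> a c; apply: sumr_ge0 => i _; apply: tri_ge0.
    by rewrite !tri_sum1 // mulr1 mul1r.
  move=> [x x'] [z z'] /=; rewrite big_distrlr [RHS]pair_bigA /=.
  by apply: eq_bigr => -[y1 y1'] _; apply: tri_prod.
exact: (fin_sum _ _ _ _ _ _ (fun y => mutinf (fun u w => \sum_v' tri_pmf P X Y Z y u v' w))
   (fun y' => mutinf (fun u w => \sum_v' tri_pmf P X' Y' Z' y' u v' w))
   (sum_pos_pV _ Y') (sum_pos_pV _ Y)).
Qed.


End Indep.
End Generic.

Theorem lemma8 (R : realType) (Om : finType) (P : Om -> R)
  (TX TY TZ TX' TY' TZ' : finType)
  (X : Om -> TX) (Y : Om -> TY) (Z : Om -> TZ)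
  (X' : Om -> TX') (Y' : Om -> TY') (Z' : Om -> TZ') :
  is_pmf P ->
  (forall x y z x' y' z',
     \sum_(o | [&& X o == x, Y o == y, Z o == z, X' o == x', Y' o == y' & Z' o == z']) P o
     = (\sum_(o | [&& X o == x, Y o == y & Z o == z]) P o)
       * (\sum_(o | [&& X' o == x', Y' o == y' & Z' o == z']) P o)) ->
  UnInfo P (fun o => (X o, X' o)) (fun o => (Y o, Y' o)) (fun o => (Z o, Z' o))
  = UnInfo P X Y Z + UnInfo P X' Y' Z'.
Proof.
move=> [HP0 HP1] Hind.
exact: (@main_eq R Om P HP0 HP1 _ _ _ _ _ _ X Y Z X' Y' Z' Hind).
Qed.
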